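(* For integer exponents $j$ of powers $w^j$ of factors $w$ occurring in a 3iet word $u_{\varepsilon,\ell}$ we have $$ j\leq 2+ \sup_{n\in\mathbb N} a_n\,, $$ where $\varepsilon=[0,a_1,a_2,\dots]$ is the continued fraction expansion of $\varepsilon$.
   Context: Parameters $\varepsilon,\ell$ satisfy $\varepsilon\in(0,1)\setminus\mathbb Q$ and $\max\{\varepsilon,1-\varepsilon\}<\ell<1$. The three interval exchange $T_{\varepsilon,\ell}:[0,\ell)\to[0,\ell)$ is defined by $T_{\varepsilon,\ell}(x)=x+1-\varepsilon$ for $x\in I_A:=[0,\ell-1+\varepsilon)$, $T_{\varepsilon,\ell}(x)=x+1-2\varepsilon$ for $x\in I_B:=[\ell-1+\varepsilon,\varepsilon)$, and $T_{\varepsilon,\ell}(x)=x-\varepsilon$ for $x\in I_C:=[\varepsilon,\ell)$. A 3iet word $u_{\varepsilon,\ell}$ with parameters $\varepsilon,\ell$ is the word $(u_n)_{n\in\mathbb N}$ over $\{A,B,C\}$ with $u_n=X$ iff $T_{\varepsilon,\ell}^n(x_0)\in I_X$, for some $x_0\in[0,\ell)$. For an integer $j$, $w^j$ denotes the concatenation of $j$ copies of $w$. *)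

(* Defs.v *)
From Stdlib Require Import Reals ZArith Arith List.
Open Scope R_scope.

Inductive letter := LA | LB | LC.

Definition T3 (eps l x : R) : R :=
  if Rlt_dec x (l - 1 + eps) then x + 1 - eps
  else if Rlt_dec x eps then x + 1 - 2 * eps
  else x - eps.

Definition code3 (eps l x : R) : letter :=
  if Rlt_dec x (l - 1 + eps) then LA
  else if Rlt_dec x eps then LB
  else LC.

Definition u3iet (eps l x0 : R) (n : nat) : letter :=
  code3 eps l (Nat.iter n (T3 eps l) x0).

Definition irrational (x : R) : Prop :=
  ~ exists p q : Z, q <> 0%Z /\ x = IZR p / IZR q.

Definition floorR (x : R) : Z := (up x - 1)%Z.

Definition gauss (x : R) : R := / x - IZR (floorR (/ x)).

(* Partial quotients: eps = [0; a_1, a_2, ...], a_0 := 0,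
   a_{k+1} = floor(1 / G^k(eps)). *)
Definition cf_digit (eps : R) (n : nat) : Z :=
  match n with
  | O => 0%Z
  | S k => floorR (/ Nat.iter k gauss eps)
  end.

Definition power_occurs (u : nat -> letter) (w : list letter) (j : nat) : Prop :=
  exists i : nat, forall k : nat, (k < j * length w)%nat ->
    u (i + k)%nat = nth (k mod length w) w LA.

(* Main.v *)
Require Import Defs.
From Stdlib Require Import Reals ZArith Arith List Lra Lia Psatz.
Open Scope R_scope.

Lemma floorR_spec x : IZR (floorR x) <= x < IZR (floorR x) + 1.
Proof. unfold floorR. rewrite minus_IZR. destruct (archimed x) as [H1 H2].
  change (IZR 1) with 1. lra. Qed.

Definition beta (eps : R) (n : nat) : R := Nat.iter n gauss eps.

Lemma beta_S eps n : beta eps (S n) = gauss (beta eps n).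
Proof. reflexivity. Qed.
Lemma dig_S eps n : cf_digit eps (S n) = floorR (/ beta eps n).
Proof. reflexivity. Qed.

Lemma irr_gauss b : 0 < b -> irrational b -> irrational (gauss b).
Proof.
  intros Hb Hi [p [q [Hq E]]]. apply Hi. unfold gauss in E.
  set (f := floorR (/ b)) in *.
  assert (Hq' : IZR q <> 0) by (apply not_0_IZR; auto).
  assert (Hib : / b = IZR (f * q + p) / IZR q).
  { rewrite plus_IZR, mult_IZR. assert (/ b = IZR f + IZR p / IZR q) by lra.
    rewrite H. field. auto. }
  assert (Hr : (f * q + p)%Z <> 0%Z).
  { intro H0. rewrite H0 in Hib. unfold Rdiv in Hib. rewrite Rmult_0_l in Hib.
    pose proof (Rinv_0_lt_compat b Hb). lra. }
  exists q, (f * q + p)%Z. split; auto.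
  rewrite <- (Rinv_inv b). rewrite Hib. field. split; auto. apply not_0_IZR; auto.
Qed.

Lemma beta_props eps : 0 < eps < 1 -> irrational eps ->
  forall n, 0 < beta eps n < 1 /\ irrational (beta eps n).
Proof.
  intros He Hi n. induction n as [|n [Hb Hbi]]; [simpl; auto|].
  rewrite beta_S. split; [|apply irr_gauss; lra || auto].
  pose proof (floorR_spec (/ beta eps n)) as Hf. unfold gauss.
  assert (gauss (beta eps n) <> 0).
  { intro H0. apply (irr_gauss _ (proj1 Hb) Hbi). exists 0%Z, 1%Z. split; [lia|].
    rewrite H0. simpl. field. }
  unfold gauss in H. lra.
Qed.

Lemma dig_ge1 eps : 0 < eps < 1 -> irrational eps -> forall n, (1 <= cf_digit eps (S n))%Z.
Proof.
  intros He Hi n. rewrite dig_S. destruct (beta_props eps He Hi n) as [[H0 H1] _].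
  pose proof (floorR_spec (/ beta eps n)) as Hf.
  assert (1 < / beta eps n).
  { rewrite <- Rinv_1. apply Rinv_lt_contravar; lra. }
  assert (0 < IZR (floorR (/ beta eps n))) by lra.
  apply lt_0_IZR in H2. lia.
Qed.

Lemma beta_rec eps : 0 < eps < 1 -> irrational eps -> forall n,
  beta eps n * beta eps (S n) = 1 - IZR (cf_digit eps (S n)) * beta eps n.
Proof.
  intros He Hi n. rewrite beta_S, dig_S. unfold gauss.
  destruct (beta_props eps He Hi n) as [[H0 H1] _]. field. lra.
Qed.

Fixpoint Pi (eps : R) (n : nat) : R :=
  match n with O => 1 | S k => Pi eps k * beta eps k end.

Lemma Pi_pos eps : 0 < eps < 1 -> irrational eps -> forall n, 0 < Pi eps n.
Proof. intros He Hi n. induction n; simpl; [lra|].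
  destruct (beta_props eps He Hi n) as [[H0 H1] _]. nra. Qed.

Lemma Pi_dec eps : 0 < eps < 1 -> irrational eps -> forall n, Pi eps (S n) < Pi eps n.
Proof. intros He Hi n. simpl. pose proof (Pi_pos eps He Hi n).
  destruct (beta_props eps He Hi n) as [[H0 H1] _]. nra. Qed.

Lemma Pi_rec eps : 0 < eps < 1 -> irrational eps -> forall n,
  Pi eps n = IZR (cf_digit eps (S n)) * Pi eps (S n) + Pi eps (S (S n)).
Proof. intros He Hi n. cbn [Pi]. pose proof (beta_rec eps He Hi n).
  replace (Pi eps n * beta eps n * beta eps (S n)) with
    (Pi eps n * (beta eps n * beta eps (S n))) by ring. rewrite H. ring. Qed.

Fixpoint cv (eps : R) (u0 u1 : Z) (n : nat) : Z * Z :=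
  match n with
  | O => (u0, u1)
  | S k => let (x, y) := cv eps u0 u1 k in (y, (cf_digit eps (S k) * y + x)%Z)
  end.

Lemma cv_S eps u0 u1 n : fst (cv eps u0 u1 (S n)) = snd (cv eps u0 u1 n) /\
  snd (cv eps u0 u1 (S n)) = (cf_digit eps (S n) * snd (cv eps u0 u1 n) + fst (cv eps u0 u1 n))%Z.
Proof. simpl. destruct (cv eps u0 u1 n). simpl. auto. Qed.

Lemma cv_rec eps u0 u1 n : fst (cv eps u0 u1 (S (S n))) =
  (cf_digit eps (S n) * fst (cv eps u0 u1 (S n)) + fst (cv eps u0 u1 n))%Z.
Proof. destruct (cv_S eps u0 u1 (S n)) as [H1 _]. destruct (cv_S eps u0 u1 n) as [H2 H3].
  rewrite H1, H3, H2. reflexivity. Qed.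

Definition Qc eps n := fst (cv eps 0 1 n).
Definition Pc eps n := fst (cv eps 1 0 n).

Lemma Q_rec eps n : Qc eps (S (S n)) = (cf_digit eps (S n) * Qc eps (S n) + Qc eps n)%Z.
Proof. apply cv_rec. Qed.
Lemma P_rec eps n : Pc eps (S (S n)) = (cf_digit eps (S n) * Pc eps (S n) + Pc eps n)%Z.
Proof. apply cv_rec. Qed.
Lemma Q0 eps : Qc eps 0 = 0%Z. Proof. reflexivity. Qed.
Lemma Q1 eps : Qc eps 1 = 1%Z. Proof. reflexivity. Qed.
Lemma P0 eps : Pc eps 0 = 1%Z. Proof. reflexivity. Qed.
Lemma P1 eps : Pc eps 1 = 0%Z. Proof. reflexivity. Qed.

Definition Dl eps n := IZR (Qc eps n) * eps - IZR (Pc eps n).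

Lemma Dl_closed eps : 0 < eps < 1 -> irrational eps -> forall n,
  Dl eps n = (-1) ^ (S n) * Pi eps n /\ Dl eps (S n) = (-1) ^ (S (S n)) * Pi eps (S n).
Proof.
  intros He Hi n. induction n as [|n [IH1 IH2]].
  - unfold Dl. rewrite Q0, Q1, P0, P1. simpl. split; ring.
  - split; auto. unfold Dl in *. rewrite Q_rec, P_rec, !plus_IZR, !mult_IZR.
    pose proof (Pi_rec eps He Hi n) as HP.
    replace (Pi eps (S (S n))) with (Pi eps n - IZR (cf_digit eps (S n)) * Pi eps (S n)) by lra.
    replace ((IZR (cf_digit eps (S n)) * IZR (Qc eps (S n)) + IZR (Qc eps n)) * eps -
      (IZR (cf_digit eps (S n)) * IZR (Pc eps (S n)) + IZR (Pc eps n))) with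
      (IZR (cf_digit eps (S n)) * (IZR (Qc eps (S n)) * eps - IZR (Pc eps (S n))) +
       (IZR (Qc eps n) * eps - IZR (Pc eps n))) by ring.
    rewrite IH1, IH2. simpl. ring.
Qed.

Lemma pow_m1_sq n : (-1) ^ n * (-1) ^ n = 1.
Proof. induction n; simpl; [ring|]. replace (-1 * (-1) ^ n * (-1 * (-1) ^ n)) with ((-1) ^ n * (-1) ^ n) by ring. auto. Qed.

Lemma Dl_abs eps : 0 < eps < 1 -> irrational eps -> forall n, Rabs (Dl eps n) = Pi eps n.
Proof. intros He Hi n. destruct (Dl_closed eps He Hi n) as [H _]. rewrite H, Rabs_mult.
  rewrite Rabs_pos_eq with (x := Pi eps n) by (left; apply Pi_pos; auto).
  rewrite <- RPow_abs. assert (Hm : Rabs (-1) = 1) by (rewrite Rabs_left; lra). rewrite Hm, pow1. ring. Qed.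

Lemma Dl_sign eps : 0 < eps < 1 -> irrational eps -> forall n, Dl eps n * Dl eps (S n) < 0.
Proof. intros He Hi n. destruct (Dl_closed eps He Hi n) as [H1 H2]. rewrite H1, H2.
  pose proof (pow_m1_sq n). pose proof (Pi_pos eps He Hi n). pose proof (Pi_pos eps He Hi (S n)).
  simpl. replace (-1 * (-1) ^ n * Pi eps n * (-1 * (-1 * (-1) ^ n) * (Pi eps n * beta eps n)))
    with (- ((-1) ^ n * (-1) ^ n) * (Pi eps n * (Pi eps n * beta eps n))) by ring.
  rewrite H. simpl in H3. nra. Qed.

Lemma det_Z eps n : (Pc eps (S n) * Qc eps n - Pc eps n * Qc eps (S n) = 1 \/
                     Pc eps (S n) * Qc eps n - Pc eps n * Qc eps (S n) = -1)%Z.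
Proof. induction n.
  - rewrite Q0, Q1, P0, P1. lia.
  - rewrite Q_rec, P_rec. nia. Qed.

Lemma Q_growth eps : 0 < eps < 1 -> irrational eps -> forall n,
  (0 <= Qc eps n /\ Qc eps n <= Qc eps (S n) /\ 1 <= Qc eps (S n) /\ Z.of_nat n <= Qc eps (S n)
   /\ Z.of_nat (S n) <= Qc eps (S (S n)))%Z.
Proof. intros He Hi n. induction n.
  - rewrite Q_rec, Q0, Q1. pose proof (dig_ge1 eps He Hi 0). lia.
  - destruct IHn as (A & B & C & D & E). pose proof (dig_ge1 eps He Hi n).
    pose proof (dig_ge1 eps He Hi (S n)).
    rewrite !Q_rec in *. rewrite Nat2Z.inj_succ in *. nia. Qed.

Lemma abs_same x y : 0 <= x * y -> Rabs x <= Rabs (x + y).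
Proof. intros. unfold Rabs; destruct (Rcase_abs x), (Rcase_abs (x + y)); nra. Qed.

Lemma solve_Z (P Q P' Q' m n e : Z) : (P' * Q - P * Q' = e)%Z -> (e * e = 1)%Z ->
  m = ((e * (m * P' - n * Q')) * Q + (e * (n * Q - m * P)) * Q')%Z /\
  n = ((e * (m * P' - n * Q')) * P + (e * (n * Q - m * P)) * P')%Z.
Proof. intros H H2. split.
  - replace ((e * (m * P' - n * Q')) * Q + (e * (n * Q - m * P)) * Q')%Z with
      (m * (e * (P' * Q - P * Q')))%Z by ring. rewrite H, H2. ring.
  - replace ((e * (m * P' - n * Q')) * P + (e * (n * Q - m * P)) * P')%Z with
      (n * (e * (P' * Q - P * Q')))%Z by ring. rewrite H, H2. ring.
Qed.

Lemma best_approx eps : 0 < eps < 1 -> irrational eps -> forall K m n,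
  (1 <= K)%nat -> (0 < m < Qc eps (S K))%Z -> Pi eps K <= Rabs (IZR m * eps - IZR n).
Proof.
  intros He Hi K m n HK Hm.
  set (e := (Pc eps (S K) * Qc eps K - Pc eps K * Qc eps (S K))%Z).
  assert (He2 : (e * e = 1)%Z) by (destruct (det_Z eps K) as [E|E]; unfold e; rewrite E; reflexivity).
  destruct (solve_Z (Pc eps K) (Qc eps K) (Pc eps (S K)) (Qc eps (S K)) m n e eq_refl He2) as [Em En].
  set (u := (e * (m * Pc eps (S K) - n * Qc eps (S K)))%Z) in *.
  set (v := (e * (n * Qc eps K - m * Pc eps K))%Z) in *.
  assert (Hr : IZR m * eps - IZR n = IZR u * Dl eps K + IZR v * Dl eps (S K)).
  { rewrite Em, En at 1. unfold Dl. rewrite !plus_IZR, !mult_IZR. ring. }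
  destruct K as [|K']; [lia|].
  destruct (Q_growth eps He Hi K') as (A & B & C & D & E).
  destruct (Q_growth eps He Hi (S K')) as (A' & B' & C' & D' & E').
  assert (Hu : (1 <= Z.abs u)%Z /\ (u * v <= 0)%Z).
  { destruct (Z.eq_dec v 0) as [Hv|Hv].
    - rewrite Hv in Em. nia.
    - destruct (Z_lt_le_dec 0 v); nia. }
  destruct Hu as [Hu1 Hu2].
  rewrite Hr. eapply Rle_trans; [|apply abs_same].
  - rewrite Rabs_mult, Dl_abs by auto. rewrite <- abs_IZR.
    pose proof (Pi_pos eps He Hi (S K')). apply IZR_le in Hu1. nra.
  - pose proof (Dl_sign eps He Hi (S K')). apply IZR_le in Hu2. rewrite mult_IZR in Hu2.
    replace (IZR u * Dl eps (S K') * (IZR v * Dl eps (S (S K')))) with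
      ((IZR u * IZR v) * (Dl eps (S K') * Dl eps (S (S K')))) by ring. nra.
Qed.

Lemma find_K eps : 0 < eps < 1 -> irrational eps -> forall m : Z, (0 <= m)%Z ->
  exists K, (1 <= K)%nat /\ (Qc eps K <= m + 1)%Z /\ (m + 1 < Qc eps (S K))%Z.
Proof.
  intros He Hi m Hm.
  assert (Cl : forall N, (exists K, (1 <= K)%nat /\ (Qc eps K <= m + 1)%Z /\ (m + 1 < Qc eps (S K))%Z)
     \/ (Qc eps (S N) <= m + 1)%Z).
  { induction N.
    - right. rewrite Q1. lia.
    - destruct IHN as [H|H]; [left; auto|].
      destruct (Z_lt_le_dec (m + 1) (Qc eps (S (S N)))).
      + left. exists (S N). split; [lia|auto].
      + right; auto. }
  destruct (Cl (Z.to_nat (m + 2))) as [H|H]; auto.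
  destruct (Q_growth eps He Hi (Z.to_nat (m + 2))) as (_ & _ & _ & D & _).
  rewrite Z2Nat.id in D by lia. lia.
Qed.

Lemma gap (al y a B : R) (q1 q2 p1 p2 : Z) :
  (0 <= q1)%Z -> (0 <= q2)%Z -> (1 <= q1 + q2)%Z ->
  IZR q1 * al - IZR p1 < 0 -> 0 < IZR q2 * al - IZR p2 ->
  -(IZR q1 * al - IZR p1) <= B -> IZR q2 * al - IZR p2 <= B ->
  exists s k, (0 <= s < q1 + q2)%Z /\ a < y - IZR s * al + IZR k <= a + B.
Proof.
  intros H1 H2 H3 Hv1 Hv2 HB1 HB2.
  set (v1 := IZR q1 * al - IZR p1) in *. set (v2 := IZR q2 * al - IZR p2) in *.
  set (mu := Rmin (- v1) v2).
  assert (Hmu : 0 < mu) by (unfold mu; apply Rmin_glb_lt; lra).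
  assert (Hm1 : mu <= - v1) by apply Rmin_l. assert (Hm2 : mu <= v2) by apply Rmin_r.
  set (k0 := floorR (a - y)). pose proof (floorR_spec (a - y)) as Hk0. fold k0 in Hk0.
  assert (Inv : forall N : nat, exists s k, (0 <= s < q1 + q2)%Z /\
    ((a < y - IZR s * al + IZR k <= a + B) \/
     (y - IZR s * al + IZR k <= a /\ y + IZR k0 + INR N * mu <= y - IZR s * al + IZR k))).
  { induction N.
    - exists 0%Z, k0. split; [lia|]. right. simpl. lra.
    - destruct IHN as (s & k & Hs & [H|[Ha Hb]]).
      + exists s, k. split; auto.
      + rewrite S_INR. destruct (Z_lt_le_dec s q2).
        * exists (s + q1)%Z, (k + p1)%Z. split; [lia|].
          assert (E : y - IZR (s + q1) * al + IZR (k + p1) = y - IZR s * al + IZR k - v1)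
            by (unfold v1; rewrite !plus_IZR; ring).
          rewrite E. destruct (Rle_lt_dec (y - IZR s * al + IZR k - v1) a); [right|left]; lra.
        * exists (s - q2)%Z, (k - p2)%Z. split; [lia|].
          assert (E : y - IZR (s - q2) * al + IZR (k - p2) = y - IZR s * al + IZR k + v2)
            by (unfold v2; rewrite !minus_IZR; ring).
          rewrite E. destruct (Rle_lt_dec (y - IZR s * al + IZR k + v2) a); [right|left]; lra. }
  set (N := Z.to_nat (up (/ mu))).
  destruct (archimed (/ mu)) as [Hu _].
  assert (HN : 1 < INR N * mu).
  { unfold N. rewrite INR_IZR_INZ, Z2Nat.id.
    - apply (Rmult_lt_compat_r mu) in Hu; auto. rewrite Rinv_l in Hu; lra.
    - apply le_IZR. pose proof (Rinv_0_lt_compat mu Hmu). lra. }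
  destruct (Inv N) as (s & k & Hs & [H|[Ha Hb]]).
  - exists s, k. auto.
  - exfalso. lra.
Qed.

Lemma arc (al y c D B : R) (m q1 q2 p1 p2 : Z) :
  (0 <= q1)%Z -> (0 <= q2)%Z -> (1 <= q1 + q2)%Z -> (q1 + q2 <= m + 1)%Z ->
  (IZR q1 * al - IZR p1) * (IZR q2 * al - IZR p2) < 0 ->
  Rabs (IZR q1 * al - IZR p1) <= B -> Rabs (IZR q2 * al - IZR p2) <= B ->
  (forall s, (0 <= s <= m)%Z -> exists k, c <= y - IZR s * al + IZR k <= c + 1 - D) ->
  D <= B.
Proof.
  intros H1 H2 H3 H4 Hs HB1 HB2 Hall.
  destruct (Rle_or_lt D B) as [|HDB]; auto. exfalso.
  assert (Hg : exists s k, (0 <= s < q1 + q2)%Z /\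
     c + 1 - D < y - IZR s * al + IZR k <= c + 1 - D + B).
  { destruct (Rlt_or_le (IZR q1 * al - IZR p1) 0) as [Hn|Hn].
    - assert (P2 : 0 < IZR q2 * al - IZR p2).
      { destruct (Rlt_or_le 0 (IZR q2 * al - IZR p2)); auto.
        assert (0 <= (IZR q1 * al - IZR p1) * (IZR q2 * al - IZR p2)) by
          (replace ((IZR q1 * al - IZR p1) * (IZR q2 * al - IZR p2)) with ((-(IZR q1 * al - IZR p1)) * (-(IZR q2 * al - IZR p2))) by ring; apply Rmult_le_pos; lra). lra. }
      rewrite Rabs_left in HB1 by lra. rewrite Rabs_right in HB2 by lra.
      apply (gap al y (c + 1 - D) B q1 q2 p1 p2); auto; lra.
    - assert (P1 : 0 < IZR q1 * al - IZR p1).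
      { destruct Hn as [Hn|Hn]; auto. rewrite <- Hn in Hs. lra. }
      assert (P2 : IZR q2 * al - IZR p2 < 0).
      { destruct (Rlt_or_le (IZR q2 * al - IZR p2) 0); auto.
        assert (0 <= (IZR q1 * al - IZR p1) * (IZR q2 * al - IZR p2)) by (apply Rmult_le_pos; lra). lra. }
      rewrite Rabs_left in HB2 by lra. rewrite Rabs_right in HB1 by lra.
      destruct (gap al y (c + 1 - D) B q2 q1 p2 p1) as (s & k & Hs' & Hz); auto; try lia; try lra.
      exists s, k. split; [lia|auto]. }
  destruct Hg as (s & k & Hs' & Hz).
  destruct (Hall s ltac:(lia)) as [k' Hk'].
  assert (Hd : 0 < IZR (k - k') < 1) by (rewrite minus_IZR; lra).
  destruct Hd as [Ha Hb]. apply lt_IZR in Ha. apply lt_IZR in Hb. lia.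
Qed.

Lemma nt_main eps M : 0 < eps < 1 -> irrational eps ->
  (forall n, (cf_digit eps n <= M)%Z) -> forall (m n : Z) (y c D : R), (1 <= m)%Z ->
  (forall s, (0 <= s <= m)%Z -> exists k, c <= y - IZR s * eps + IZR k <= c + 1 - D) ->
  D < (IZR M + 2) * Rabs (IZR m * eps - IZR n).
Proof.
  intros He Hi HM m n y c D Hm Hall.
  destruct (find_K eps He Hi m ltac:(lia)) as (K & HK1 & HK2 & HK3).
  destruct K as [|K']; [lia|].
  destruct (Q_growth eps He Hi K') as (A & B & C & _ & _).
  assert (HD : D <= Pi eps K' + Pi eps (S K')).
  { apply (arc eps y c D _ m (Qc eps K') (Qc eps (S K') - Qc eps K') (Pc eps K') (Pc eps (S K') - Pc eps K'));
      try lia; auto.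
    - rewrite !minus_IZR.
      pose proof (Dl_sign eps He Hi K'). pose proof (Rle_0_sqr (Dl eps K')). unfold Rsqr in *.
      match goal with |- ?G < 0 => replace G with (Dl eps K' * Dl eps (S K') - Dl eps K' * Dl eps K') by (unfold Dl; ring) end.
      lra.
    - change (IZR (Qc eps K') * eps - IZR (Pc eps K')) with (Dl eps K'). rewrite Dl_abs by auto. pose proof (Pi_pos eps He Hi (S K')). lra.
    - rewrite !minus_IZR.
      match goal with |- Rabs ?G <= _ => replace G with (Dl eps (S K') + - Dl eps K') by (unfold Dl; ring) end.
      eapply Rle_trans; [apply Rabs_triang|]. rewrite Rabs_Ropp, !Dl_abs by auto. lra. }
  pose proof (best_approx eps He Hi (S K') m n ltac:(lia) ltac:(lia)) as Hb.
  pose proof (Pi_rec eps He Hi K') as Hr. pose proof (Pi_dec eps He Hi (S K')) as Hd.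
  pose proof (Pi_pos eps He Hi (S (S K'))).
  pose proof (HM (S K')) as HMa. apply IZR_le in HMa.
  pose proof (HM 0%nat) as HM0. simpl in HM0. apply IZR_le in HM0.
  pose proof (Pi_pos eps He Hi (S K')).
  assert (IZR (cf_digit eps (S K')) * Pi eps (S K') <= IZR M * Pi eps (S K'))
    by (apply Rmult_le_compat_r; lra).
  nra.
Qed.

Definition X eps l x0 n := Nat.iter n (T3 eps l) x0.
Definition shift eps L := match L with LA => 1 - eps | LB => 1 - 2 * eps | LC => - eps end.

Lemma X_S eps l x0 n : X eps l x0 (S n) = X eps l x0 n + shift eps (code3 eps l (X eps l x0 n)).
Proof. change (X eps l x0 (S n)) with (T3 eps l (X eps l x0 n)).
  unfold T3, code3, shift. destruct (Rlt_dec _ _); [ring|]. destruct (Rlt_dec _ _); ring. Qed.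

Lemma X_range eps l x0 : 0 < eps < 1 -> Rmax eps (1 - eps) < l -> l < 1 -> 0 <= x0 < l ->
  forall n, 0 <= X eps l x0 n < l.
Proof. intros He Hl Hl1 Hx n. pose proof (Rmax_l eps (1 - eps)). pose proof (Rmax_r eps (1 - eps)).
  induction n; [exact Hx|]. rewrite X_S. unfold code3, shift.
  destruct (Rlt_dec _ _); [lra|]. destruct (Rlt_dec _ _); lra. Qed.

Lemma code_B eps l z : code3 eps l z = LB -> l - 1 + eps <= z < eps.
Proof. unfold code3. destruct (Rlt_dec _ _); [discriminate|]. destruct (Rlt_dec _ _); [lra|discriminate]. Qed.

Lemma same_code eps l x0 a b N :
  (forall K, (K < N)%nat -> code3 eps l (X eps l x0 (a + K)) = code3 eps l (X eps l x0 (b + K))) ->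
  X eps l x0 (b + N) - X eps l x0 (a + N) = X eps l x0 b - X eps l x0 a.
Proof. induction N; intros H.
  - rewrite !Nat.add_0_r. ring.
  - rewrite !Nat.add_succ_r, !X_S. rewrite (H N) by lia. rewrite <- IHN; [ring|].
    intros; apply H; lia. Qed.

Lemma dyn eps l x0 : 0 < eps < 1 -> Rmax eps (1 - eps) < l -> l < 1 -> 0 <= x0 < l ->
  forall w j, (0 < length w)%nat -> (1 <= j)%nat -> power_occurs (u3iet eps l x0) w j ->
  exists y m kk, (1 <= m)%nat /\ forall s, (s <= m)%nat -> exists z k, 0 <= z < 1 /\
    0 <= z + INR (j - 1) * (IZR kk - INR m * eps) < 1 /\ z = y - INR s * eps + IZR k.
Proof.
  intros He Hl Hl1 Hx w j Hw Hj [i Hi].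
  pose proof (Rmax_l eps (1 - eps)). pose proof (Rmax_r eps (1 - eps)).
  set (p := length w) in *.
  pose proof (X_range eps l x0 He Hl Hl1 Hx) as XR.
  assert (Hc : forall r K, (r < j)%nat -> (K < p)%nat ->
    code3 eps l (X eps l x0 (i + r * p + K)) = code3 eps l (X eps l x0 (i + K))).
  { intros r K Hr HK. pose proof (Hi (r * p + K)%nat ltac:(nia)) as H1.
    pose proof (Hi K ltac:(nia)) as H2. unfold u3iet in *. fold p in H1, H2.
    unfold X. rewrite <- Nat.add_assoc, H1, H2. f_equal.
    rewrite Nat.add_comm, Nat.Div0.mod_add. reflexivity. }
  set (t := X eps l x0 (i + p) - X eps l x0 i).
  assert (Hcopy : forall r, (r <= j)%nat -> X eps l x0 (i + r * p) = X eps l x0 i + INR r * t).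
  { induction r; intros Hr.
    - simpl. rewrite Nat.add_0_r. ring.
    - pose proof (same_code eps l x0 i (i + r * p) p) as HS.
      rewrite (IHr ltac:(lia)) in HS. replace (i + S r * p)%nat with (i + r * p + p)%nat by nia.
      rewrite S_INR. assert (HS' := HS (fun K HK => eq_sym (Hc r K ltac:(lia) HK))).
      unfold t in *. lra. }
  set (E := INR (j - 1) * t).
  assert (Hshift : forall K, (K <= p)%nat -> X eps l x0 (i + (j - 1) * p + K) = X eps l x0 (i + K) + E).
  { intros K HK. pose proof (same_code eps l x0 i (i + (j - 1) * p) K) as HS.
    rewrite Hcopy in HS by lia. assert (HS' := HS (fun K' HK' => eq_sym (Hc (j - 1)%nat K' ltac:(lia) ltac:(lia)))).
    unfold E. lra. }
  assert (HG : forall K, (K <= p)%nat -> 0 <= X eps l x0 (i + K) < 1 /\ 0 <= X eps l x0 (i + K) + E < 1).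
  { intros K HK. rewrite <- Hshift by auto. pose proof (XR (i + K)%nat). pose proof (XR (i + (j - 1) * p + K)%nat). lra. }
  set (y := X eps l x0 i).
  set (Good := fun s : nat => exists z k, 0 <= z < 1 /\ 0 <= z + E < 1 /\ z = y - INR s * eps + IZR k).
  assert (Cl : forall K, (K <= p)%nat -> exists sK kK, X eps l x0 (i + K) = y - INR sK * eps + IZR kK /\
     (K <= sK)%nat /\ forall s, (s <= sK)%nat -> Good s).
  { induction K; intros HK.
    - exists 0%nat, 0%Z. rewrite Nat.add_0_r. split; [simpl; unfold y; ring|]. split; [lia|].
      intros s Hs. assert (s = 0%nat) by lia. subst s. exists y, 0%Z.
      pose proof (HG 0%nat ltac:(lia)) as HG0. rewrite Nat.add_0_r in HG0. unfold y. simpl. split; [lra|]. split; [lra|ring].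
    - destruct (IHK ltac:(lia)) as (sK & kK & HX & HsK & Hgood).
      pose proof (HG (S K) HK) as HGS. rewrite Nat.add_succ_r, X_S in HGS |- *.
      destruct (code3 eps l (X eps l x0 (i + K))) eqn:HL; simpl shift in *.
      + exists (S sK), (kK + 1)%Z. split; [rewrite S_INR, plus_IZR, HX; ring|]. split; [lia|].
        intros s Hs. destruct (Nat.eq_dec s (S sK)); [|apply Hgood; lia]. subst s.
        exists (X eps l x0 (i + K) + (1 - eps)), (kK + 1)%Z. split; [lra|]. split; [lra|].
        rewrite S_INR, plus_IZR, HX. simpl. ring.
      + assert (HB1 := code_B _ _ _ HL).
        assert (HB2 : code3 eps l (X eps l x0 (i + (j - 1) * p + K)) = LB) by (rewrite Hc; auto; lia).
        apply code_B in HB2. rewrite Hshift in HB2 by lia.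
        exists (S (S sK)), (kK + 1)%Z. split; [rewrite !S_INR, plus_IZR, HX; ring|]. split; [lia|].
        intros s Hs. destruct (Nat.eq_dec s (S (S sK))).
        * subst s. exists (X eps l x0 (i + K) + (1 - 2 * eps)), (kK + 1)%Z. split; [lra|]. split; [lra|].
          rewrite !S_INR, plus_IZR, HX. simpl. ring.
        * destruct (Nat.eq_dec s (S sK)); [|apply Hgood; lia]. subst s.
          exists (X eps l x0 (i + K) + (1 - eps)), (kK + 1)%Z. split; [lra|]. split; [lra|].
          rewrite S_INR, plus_IZR, HX. simpl. ring.
      + exists (S sK), kK. split; [rewrite S_INR, HX; ring|]. split; [lia|].
        intros s Hs. destruct (Nat.eq_dec s (S sK)); [|apply Hgood; lia]. subst s.
        exists (X eps l x0 (i + K) + - eps), kK. split; [lra|]. split; [lra|].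
        rewrite S_INR, HX. ring. }
  destruct (Cl p ltac:(lia)) as (m & kk & HX & Hm & Hgood).
  exists y, m, kk. split; [lia|].
  assert (Ht : t = IZR kk - INR m * eps) by (unfold t; rewrite HX; unfold y; ring).
  intros s Hs. destruct (Hgood s Hs) as (z & k & H1 & H2 & H3). exists z, k.
  rewrite <- Ht. fold E. auto.
Qed.

Theorem corollary1 (eps l x0 : R)
  (Heps : 0 < eps < 1) (Hirr : irrational eps)
  (Hl : Rmax eps (1 - eps) < l) (Hl1 : l < 1)
  (Hx0 : 0 <= x0 < l)
  (w : list letter) (Hw : (0 < length w)%nat) (j : nat)
  (Hocc : power_occurs (u3iet eps l x0) w j)
  (M : Z) (HM : forall n : nat, (cf_digit eps n <= M)%Z) :
  (Z.of_nat j <= 2 + M)%Z.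
Proof.
  pose proof (HM 0%nat) as HM0. change (0 <= M)%Z in HM0.
  destruct j as [|j']; [rewrite Nat2Z.inj_0; lia|].
  destruct (dyn eps l x0 Heps Hl Hl1 Hx0 w (S j') Hw ltac:(lia) Hocc) as (y & m & kk & Hm & Hall).
  replace (S j' - 1)%nat with j' in Hall by lia.
  set (t := IZR kk - INR m * eps) in *.
  assert (Ht : t <> 0).
  { intro H0. apply Hirr. exists kk, (Z.of_nat m). split; [lia|].
    rewrite <- INR_IZR_INZ. assert (INR m <> 0) by (apply not_0_INR; lia).
    unfold t in H0. field_simplify_eq; auto. lra. }
  set (E := INR j' * t) in *.
  set (D := Rabs E).
  set (c := if Rle_dec 0 E then 0 else D).
  assert (Hall' : forall s, (0 <= s <= Z.of_nat m)%Z -> exists k, c <= y - IZR s * eps + IZR k <= c + 1 - D).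
  { intros s Hs. destruct (Hall (Z.to_nat s) ltac:(lia)) as (z & k & H1 & H2 & H3).
    rewrite INR_IZR_INZ, Z2Nat.id in H3 by lia. exists k. rewrite <- H3.
    unfold c, D. destruct (Rle_dec 0 E).
    - rewrite Rabs_pos_eq by auto. lra.
    - rewrite Rabs_left by lra. lra. }
  pose proof (nt_main eps M Heps Hirr HM (Z.of_nat m) kk y c D ltac:(lia) Hall') as Hmain.
  rewrite <- INR_IZR_INZ in Hmain.
  replace (INR m * eps - IZR kk) with (- t) in Hmain by (unfold t; ring).
  rewrite Rabs_Ropp in Hmain. unfold D, E in Hmain. rewrite Rabs_mult in Hmain.
  rewrite (Rabs_pos_eq (INR j')) in Hmain by apply pos_INR.
  assert (Hta : 0 < Rabs t) by (apply Rabs_pos_lt; auto).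
  assert (Hj : INR j' < IZR M + 2).
  { apply (Rmult_lt_reg_r (Rabs t)); auto. }
  rewrite INR_IZR_INZ in Hj. replace (IZR M + 2) with (IZR (M + 2)) in Hj by (rewrite plus_IZR; reflexivity).
  apply lt_IZR in Hj. lia.
Qed.
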